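(* Let $n\ge1$ and let $G,G'$ be canonical weighted voting games on players $N=\{1,\dots,n\}$ such that $G'$ covers $G$ in the poset $(\mathcal{G}_{\mathsf{cwvg}}(n),\preceq_{\mathsf{MWC}})$, i.e., $W_{\min,G}\subset W_{\min,G'}$ and $|W_{\min,G'}|=|W_{\min,G}|+1$. Let $L_{\mathsf{ceil},G}$ be the set of ceiling coalitions of $G$. Then there exist $C\in L_{\mathsf{ceil},G}$ and an integer $i$ with $0\le i\le n$ such that $\mathsf{rtrunc}(C,i)$ is defined and $W_{\min,G'}=W_{\min,G}\cup\{\mathsf{rtrunc}(C,i)\}$.
   Context: A simple game on $N$ is a function $v:2^N\to\{0,1\}$ (all-losing allowed). $W_{\min,G}$ is the set of minimal winning coalitions (winning $S$ with every $S\setminus\{i\}$, $i\in S$, losing); maximal losing coalitions are losing $S$ with every $S\cup\{i\}$, $i\notin S$, winning. A weighted voting game has $q\ge0$, $w_i\ge0$ with $v(S)=1\iff\sum_{i\in S}w_i\ge q$. Write $i\succeq j$ if $v(S\cup\{i\})\ge v(S\cup\{j\})$ for all $S\subseteq N\setminus\{i,j\}$; a canonical weighted voting game is a weighted voting game with $1\succeq\cdots\succeq n$. A coalition $S'$ is a direct left-shift of $S$ if there is $i\in S$ with $2\le i\le n$, $i-1\notin S$ and $S'=(S\setminus\{i\})\cup\{i-1\}$; a left-shift of $S$ is a coalition obtained from $S$ by one or more successive direct left-shifts. A ceiling coalition is a maximal losing coalition all of whose left-shifts are winning. For a coalition $S$: $\mathsf{rtrunc}(S,0)=S$; for $0<i\le|S|$,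 $\mathsf{rtrunc}(S,i)$ is $S$ with its $i$ highest-numbered players removed; undefined for $i>|S|$. *)

(* Defs.v *)
(* Players N = {1,...,n} are represented by 'I_n
   (player k is the ordinal k-1; the order is preserved). *)
From HB Require Import structures.
From mathcomp Require Import all_boot all_order all_algebra.
From mathcomp Require Import reals.
Set Implicit Arguments. Unset Strict Implicit. Unset Printing Implicit Defensive.
Import Order.TTheory GRing.Theory Num.Theory.

(* A simple game on 'I_n : v : 2^N -> {0,1} (all-losing allowed). *)
Definition sgame (n : nat) := {set 'I_n} -> bool.

Definition is_wvg (R : realType) (n : nat) (v : sgame n) : Prop :=
  exists (q : R) (w : 'I_n -> R),
    (0 <= q)%R /\ (forall i, 0 <= w i)%R /\
    forall S : {set 'I_n}, v S = (q <= \sum_(i in S) w i)%R.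

Definition desir (n : nat) (v : sgame n) (i j : 'I_n) : Prop :=
  forall S : {set 'I_n}, i \notin S -> j \notin S -> v (j |: S) <= v (i |: S).

Definition is_cwvg (R : realType) (n : nat) (v : sgame n) : Prop :=
  is_wvg R v /\ forall i j : 'I_n, (i <= j)%N -> desir v i j.

Definition Wmin (n : nat) (v : sgame n) : {set {set 'I_n}} :=
  [set S : {set 'I_n} | v S && [forall i in S, ~~ v (S :\ i)]].

Definition max_losing (n : nat) (v : sgame n) (S : {set 'I_n}) : Prop :=
  ~~ v S /\ forall i : 'I_n, i \notin S -> v (i |: S).

Definition direct_left_shift (n : nat) (S S' : {set 'I_n}) : Prop :=
  exists i j : 'I_n, [/\ i \in S, j.+1 = i :> nat, j \notin S &
                        S' = j |: (S :\ i)].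

Inductive left_shift (n : nat) (S : {set 'I_n}) : {set 'I_n} -> Prop :=
| ls_one S' : direct_left_shift S S' -> left_shift S S'
| ls_step S1 S2 : left_shift S S1 -> direct_left_shift S1 S2 -> left_shift S S2.

Definition ceiling (n : nat) (v : sgame n) (C : {set 'I_n}) : Prop :=
  max_losing v C /\ forall C', left_shift C C' -> v C'.

(* rtrunc S i : remove the i highest-numbered players of S (meaningful
   for i <= #|S|; definedness is required separately). *)
Definition rtrunc (n : nat) (S : {set 'I_n}) (i : nat) : {set 'I_n} :=
  [set x in S | (i <= #|[set y in S | (x < y)%N]|)%N].

(* Main.v *)
Require Import Defs.
From HB Require Import structures.
From mathcomp Require Import all_boot all_order all_algebra.
From mathcomp Require Import reals.
From mathcomp Require Import zify.
Import Order.TTheory GRing.Theory Num.Theory.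

Lemma wvg_mono (R : realType) n (v : sgame n) : is_wvg R v ->
  forall A B : {set 'I_n}, A \subset B -> v A -> v B.
Proof.
move=> [q [w [q0 [w0 hv]]]] A B sAB; rewrite !hv => hA.
apply: le_trans hA _.
rewrite [X in (_ <= X)%R](big_setID A) /= (setIidPr sAB) lerDl.
by apply: sumr_ge0 => i _.
Qed.

Lemma min_sub n (v : sgame n) (Y : {set 'I_n}) : v Y ->
  exists2 Z : {set 'I_n}, Z \subset Y & Z \in Wmin v.
Proof.
move=> vY.
have := @arg_minnP _ Y (fun Z => (Z \subset Y) && v Z) (fun Z => #|Z|).
rewrite subxx vY => /(_ isT) [Z /andP [sZ vZ] hmin].
exists Z => //; rewrite inE vZ /=; apply/forallP => i; apply/implyP => iZ.
apply/negP => vZi.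
have := hmin (Z :\ i); rewrite vZi andbT (subset_trans (subD1set Z i) sZ).
rewrite (cardsD1 i Z) iZ => /(_ isT); lia.
Qed.

Lemma shift_win n (v : sgame n) : (forall i j : 'I_n, (i <= j)%N -> desir v i j) ->
  forall X Y, direct_left_shift X Y -> v X -> v Y.
Proof.
move=> d X Y [i [j [iX ji jX ->]]] vX.
have h1 : j \notin X :\ i by rewrite !inE (negbTE jX) andbF.
have h2 : i \notin X :\ i by rewrite !inE eqxx.
have := d j i (ltac:(lia)) (X :\ i) h1 h2.
rewrite setD1K // vX.
by case: (v (j |: X :\ i)).
Qed.

Arguments wvg_mono {R n v} _ {A B}.
Arguments min_sub {n v Y}.
Arguments shift_win {n v} _ {X Y}.

Theorem theorem10 (R : realType) (n : nat) (G G' : {set 'I_n} -> bool) :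
  (0 < n)%N ->
  is_cwvg R G -> is_cwvg R G' ->
  Wmin G \proper Wmin G' -> #|Wmin G'| = (#|Wmin G|).+1 ->
  exists (C : {set 'I_n}) (i : nat),
    [/\ ceiling G C, (i <= n)%N, (i <= #|C|)%N &
        Wmin G' = Wmin G :|: [set rtrunc C i]].
Proof.
move=> _ [wG cG] [wG' cG'] prop hcard.
have sub : Wmin G \subset Wmin G' by case/properP: prop.
have : #|Wmin G' :\: Wmin G| == 1.
  by rewrite cardsD setIC (setIidPl sub) hcard subSnn.
case/cards1P => S hS.
have SW' : S \in Wmin G' by have := set11 S; rewrite -hS inE => /andP[].
have SnW : S \notin Wmin G by have := set11 S; rewrite -hS inE => /andP[].
have eqW : Wmin G' = Wmin G :|: [set S].
  rewrite -hS; apply/setP => Z; rewrite in_setU in_setD.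
  case ZG: (Z \in Wmin G) => //=.
  by rewrite (subsetP sub _ ZG).
have G'S : G' S by move: SW'; rewrite inE => /andP[].
have K : forall Y, G' Y -> ~~ (S \subset Y) -> G Y.
  move=> Y vY nS; have [Z sZY ZW] := min_sub vY.
  case ZG: (Z \in Wmin G).
    by apply: (wvg_mono wG sZY); move: ZG; rewrite inE => /andP[].
  have : Z \in Wmin G' :\: Wmin G by rewrite inE ZG ZW.
  rewrite hS inE => /eqP ZS; by rewrite -ZS sZY in nS.
have GS : ~~ G S.
  apply/negP => vS; have [Z sZS ZW] := min_sub vS.
  case: (eqVneq Z S) => [ZS|ZS]; first by rewrite -ZS ZW in SnW.
  have : Z \proper S by rewrite properEneq ZS.
  case/properP => _ [i iS iZ].
  have G'Z : G' Z by move: (subsetP sub _ ZW); rewrite inE => /andP[].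
  have : G' (S :\ i).
    apply: (wvg_mono wG' _ G'Z); apply/subsetP => x xZ.
    rewrite !inE (subsetP sZS _ xZ) andbT; apply/eqP => xi.
    by rewrite -xi xZ in iZ.
  move: SW'; rewrite inE => /andP[_ /forallP /(_ i)].
  by rewrite iS /= => /negbTE ->.
pose Psi (C : {set 'I_n}) := (\sum_(x in C) (2 * n - x))%N.
have := @arg_maxnP _ S (fun C => (S \subset C) && ~~ G C) Psi.
rewrite subxx GS => /(_ isT) [C /andP [SC GC] maxC].
have above : forall x y, x \in C -> x \notin S -> y \in S -> (y < x)%N.
  move=> x y xC xS yS; rewrite ltnNge; apply/negP => xy.
  have h1 : x \notin S :\ y by rewrite !inE (negbTE xS) andbF.
  have h2 : y \notin S :\ y by rewrite !inE eqxx.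
  have := cG' x y xy (S :\ y) h1 h2.
  rewrite setD1K // G'S => hY.
  have G'Y : G' (x |: S :\ y) by move: hY; case: (G' _).
  have GY : G (x |: S :\ y).
    apply: (K _ G'Y); apply/negP => /subsetP /(_ y yS).
    rewrite !inE eqxx /= orbF => /eqP yx.
    by rewrite yx (negbTE xS) in yS.
  have : G C.
    apply: (wvg_mono wG _ GY); apply/subsetP => z; rewrite !inE => /orP [/eqP -> //|].
    by move=> /andP [_ zS]; exact: (subsetP SC).
  by rewrite (negbTE GC).
have shiftC : forall Y, direct_left_shift C Y -> G Y.
  move=> Y hY; case: (boolP (S \subset Y)) => hSY.
    apply/negPn/negP => nG.
    have := maxC Y; rewrite hSY nG => /(_ isT).
    case: hY => [i [j [iC ji jC ->]]].
    rewrite /Psi big_setU1 /=; last by rewrite !inE (negbTE jC) andbF.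
    rewrite (big_setD1 i iC) /=.
    set s := (\sum_(_ in _) _); move: (ltn_ord i) ji; clear -s; lia.
  apply: (K _ _ hSY); apply: (shift_win cG' hY).
  exact: (wvg_mono wG' SC).
have ceilC : ceiling G C.
  split.
    split => // x xC; apply/negPn/negP => nG.
    have := maxC (x |: C); rewrite nG andbT (subset_trans SC (subsetU1 x C)).
    move=> /(_ isT); rewrite /Psi big_setU1 //=.
    set s := (\sum_(_ in _) _); move: (ltn_ord x); clear -s; lia.
  move=> C'; elim => [S' h|S1 S2 _ IH h]; first exact: shiftC.
  exact: (shift_win cG h).
exists C, #|C :\: S|; split => //.
- apply: leq_trans (subset_leq_card (subsetDl C S)) _.
  by apply: leq_trans (max_card _) _; rewrite card_ord.
- exact: subset_leq_card (subsetDl C S).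
have -> : rtrunc C #|C :\: S| = S.
  apply/setP => x; rewrite /rtrunc !inE.
  case xS: (x \in S).
    rewrite (subsetP SC _ xS) /=; apply: subset_leq_card.
    apply/subsetP => y; rewrite !inE => /andP [yS yC].
    by rewrite yC (above y x yC yS xS).
  case xC: (x \in C) => //=; apply/negbTE; rewrite -ltnNge.
  apply: proper_card; apply/properP; split.
    apply/subsetP => y; rewrite !inE => /andP [yC xy]; rewrite yC andbT.
    apply/negP => yS; have := above x y xC (negbT xS) yS; lia.
  by exists x; rewrite !inE ?xS ?xC ?ltnn.
exact: eqW.
Qed.
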